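(* Let $R$ be a cubiculated region. The tiling space $\mathcal{T}_R$ is flip connected if and only if $I_{R_{tiling}}\subseteq I_{R_{flip}}$.
   Context: A cubiculated region $R$ is a homogeneous cubical complex of dimension $n$ embedded in $\mathbb{R}^N$ ($n\le N$), a union of elementary $n$-cubes. A domino is two elementary $n$-cubes of $R$ sharing an $(n-1)$-face; $\mathcal{D}_R$ is the set of dominoes. A domino tiling $T\subseteq\mathcal{D}_R$ covers every elementary cube exactly once; $\mathcal{T}_R$ is the set of tilings. $G_R$ is the graph with a vertex per elementary cube and an edge between cubes sharing an $(n-1)$-face; dominoes are edges of $G_R$. A move $M=(D_1,D_2)$ (with $D_1,D_2\subseteq\mathcal{D}_R$) takes a tiling $T_1$ to $T_1+M=(T_1\setminus D_1)\cup D_2$. A local flip is a move that replaces two adjacent parallel dominoes (sharing two $(n-1)$-faces) by the two adjacent parallel dominoes covering the same four cubes in the perpendicular direction; equivalently $D_1\cup D_2$ is a $4$-cycle of $G_R$ with $D_1,D_2$ its two pairs of opposite edges. $\mathcal{M}_{flip}$ is the set of all local flips. $\mathcal{T}_R$ is flip connected if for all $T_1,T_2\in\mathcal{T}_R$ there are $M_1,\dots,M_r\in\mathcal{M}_{flip}$ with $T_2=T_1+M_1+\dots+M_r$ and $T_1+M_1+\dots+M_s\in\mathcal{T}_R$ for all $1\le s\le r$. In the polynomial ring $\mathbb{K}[y_e: e\in E(G_R)]$ write $y^{E_0}=\prod_{e\in E_0}y_e$ for $E_0\subseteq E(G_R)$. The flip ideal is $I_{R_{flip}}=\langle y^{D_1}-y^{D_2}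 : (D_1,D_2)\in\mathcal{M}_{flip}\rangle$ and the tiling ideal is $I_{R_{tiling}}=\langle y^{T_1}-y^{T_2} : T_1,T_2\in\mathcal{T}_R\rangle$. *)

(* Defs.v *)
From HB Require Import structures.
From mathcomp Require Import all_boot all_order all_algebra.
From mathcomp Require Import mpoly.
Set Implicit Arguments. Unset Strict Implicit. Unset Printing Implicit Defensive.
Import Order.TTheory GRing.Theory Num.Theory.

(* An elementary cube is the product over coordinates i < N of
   [base i, base i + 1] if i \in dirs, and of the degenerate interval
   [base i, base i] otherwise.  Its dimension is #|dirs|. *)
Definition cube (N : nat) : Type := ({ffun 'I_N -> int} * {set 'I_N})%type.

Definition cube_lo N (c : cube N) (i : 'I_N) : int := c.1 i.
Definition cube_hi N (c : cube N) (i : 'I_N) : int :=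
  (c.1 i + ((i \in c.2) : nat)%:Z)%R.
Definition cube_dim N (c : cube N) : nat := #|c.2|.

(* The intersection of two elementary cubes is computed coordinatewise;
   it is nonempty iff every coordinate interval meets, and its dimension is
   the number of coordinates where the intersection is a unit interval. *)
Definition meet_nonempty N (c d : cube N) : bool :=
  [forall i, (Order.max (cube_lo c i) (cube_lo d i)
               <= Order.min (cube_hi c i) (cube_hi d i))%R].
Definition meet_dim N (c d : cube N) : nat :=
  #|[set i | (Order.max (cube_lo c i) (cube_lo d i)
               < Order.min (cube_hi c i) (cube_hi d i))%R]|.

Definition cubiculated (N n : nat) (R : seq (cube N)) : Prop :=
  forall c, c \in R -> cube_dim c = n.

Section Region.
Variables (N n : nat) (R : seq (cube N)).

Definition cubeR : finType := seq_sub R.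

Definition share_face (c d : cubeR) : bool :=
  [&& c != d, meet_nonempty (val c) (val d) & (meet_dim (val c) (val d)).+1 == n].

(* edges of G_R (= dominoes): unordered pairs {c,d} sharing an (n-1)-face *)
Definition is_edge (e : {set cubeR}) : bool :=
  [exists c, exists d, share_face c d && (e == [set c; d])].

Definition edgeR : finType := {e : {set cubeR} | is_edge e}.

Definition is_tiling (T : {set edgeR}) : Prop :=
  forall c : cubeR, #|[set e in T | c \in val e]| = 1%N.

Definition move : Type := ({set edgeR} * {set edgeR})%type.
Definition apply_move (T : {set edgeR}) (M : move) : {set edgeR} :=
  (T :\: M.1) :|: M.2.

Definition is_flip (M : move) : Prop :=
  exists a b c d : cubeR,
    [/\ uniq [:: a; b; c; d],
        [/\ share_face a b, share_face b c, share_face c d & share_face d a],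
        M.1 = [set e : edgeR | (val e == [set a; b]) || (val e == [set c; d])] &
        M.2 = [set e : edgeR | (val e == [set b; c]) || (val e == [set d; a])]].

Definition flip_connected : Prop :=
  forall T1 T2 : {set edgeR}, is_tiling T1 -> is_tiling T2 ->
    exists Ms : seq move,
      [/\ forall M, M \in Ms -> is_flip M,
          forall s, (1 <= s <= size Ms)%N -> is_tiling (foldl apply_move T1 (take s Ms))
        & foldl apply_move T1 Ms = T2].

Variable K : fieldType.
Definition polyR : Type := {mpoly K[#|edgeR|]}.

Definition yvar (e : edgeR) : polyR := 'X_(enum_rank e).
Definition ymon (E0 : {set edgeR}) : polyR := (\prod_(e in E0) yvar e)%R.

Definition ideal_gen (S : polyR -> Prop) (p : polyR) : Prop :=
  exists gs : seq (polyR * polyR),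
    (forall x, x \in gs -> S x.2) /\ p = (\sum_(x <- gs) x.1 * x.2)%R.

Definition flip_gens (p : polyR) : Prop :=
  exists M : move, is_flip M /\ p = (ymon M.1 - ymon M.2)%R.
Definition tiling_gens (p : polyR) : Prop :=
  exists T1 T2 : {set edgeR}, [/\ is_tiling T1, is_tiling T2 & p = (ymon T1 - ymon T2)%R].

Definition I_flip : polyR -> Prop := ideal_gen flip_gens.
Definition I_tiling : polyR -> Prop := ideal_gen tiling_gens.

End Region.

(* Main.v *)
Require Import Defs.
From HB Require Import structures.
From mathcomp Require Import all_boot all_order all_algebra.
From mathcomp Require Import mpoly.
From Stdlib Require Import ClassicalEpsilon.
Set Implicit Arguments. Unset Strict Implicit. Unset Printing Implicit Defensive.

Lemma tiling_uniq {N n} {R : seq (cube N)} (T : {set edgeR n R}) x e f :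
  is_tiling T -> e \in T -> f \in T -> x \in val e -> x \in val f -> e = f.
Proof.
move=> HT eT fT xe xf; have [g Hg] := cards1P (introT eqP (HT x)).
have : e \in [set e in T | x \in val e] by rewrite inE eT xe.
have : f \in [set e in T | x \in val e] by rewrite inE fT xf.
by rewrite Hg !inE => /eqP -> /eqP ->.
Qed.

Lemma tiling_ex {N n} {R : seq (cube N)} (T : {set edgeR n R}) x :
  is_tiling T -> exists e, e \in T /\ x \in val e.
Proof.
move=> HT; have [g Hg] := cards1P (introT eqP (HT x)).
have : g \in [set e in T | x \in val e] by rewrite Hg set11.
by rewrite inE => /andP [? ?]; exists g.
Qed.

Lemma edge_ne {N n} {R : seq (cube N)} (e : edgeR n R) : exists x, x \in val e.
Proof.
case: e => s /= /existsP [c /existsP [d /andP [_ /eqP ->]]].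
by exists c; rewrite set21.
Qed.

Lemma tiling_sub_eq {N n} {R : seq (cube N)} (T T' : {set edgeR n R}) :
  is_tiling T -> is_tiling T' -> T \subset T' -> T = T'.
Proof.
move=> HT HT' /subsetP sub; apply/setP => e; apply/idP/idP; first exact: sub.
move=> eT'; have [x xe] := edge_ne e.
have [f [fT xf]] := tiling_ex x HT.
by rewrite (tiling_uniq HT' eT' (sub _ fT) xe xf).
Qed.

Lemma move_tiling {N n} {R : seq (cube N)} (T D1 D2 : {set edgeR n R}) :
  is_tiling T -> D1 \subset T ->
  (forall x, #|[set e in D1 | x \in val e]| = #|[set e in D2 | x \in val e]|) ->
  (forall e, e \in D2 -> e \in T -> e \in D1) /\ is_tiling ((T :\: D1) :|: D2).
Proof.
move=> HT /subsetP sub Hc.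
have disj : forall e, e \in D2 -> e \in T -> e \in D1.
  move=> e eD2 eT; have [x xe] := edge_ne e.
  have : 0 < #|[set e in D1 | x \in val e]|.
    by rewrite Hc; apply/card_gt0P; exists e; rewrite inE eD2 xe.
  case/card_gt0P => f; rewrite inE => /andP [fD1 xf].
  by rewrite (tiling_uniq HT eT (sub _ fD1) xe xf).
split=> // x.
set S := [set e in T | x \in val e].
have HS : #|S| = 1 by exact: HT.
rewrite -(cardsID D1 S) in HS.
have E1 : S :&: D1 = [set e in D1 | x \in val e].
  apply/setP => e; rewrite !inE; case eD1: (e \in D1); rewrite ?andbF ?andbT //=.
  by rewrite sub.
rewrite E1 Hc in HS.
rewrite -HS addnC.
have -> : [set e in T :\: D1 :|: D2 | x \in val e] = (S :\: D1) :|: [set e in D2 | x \in val e].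
  apply/setP => e; rewrite !inE; case: (e \in D2); case: (e \in D1); case: (e \in T) => //=; by rewrite ?orbb ?orbF.
rewrite cardsU.
have -> : (S :\: D1) :&: [set e in D2 | x \in val e] = set0.
  apply/setP => e; rewrite !inE; case eD2 : (e \in D2); rewrite ?andbF //.
  case eT : (e \in T); rewrite ?andbF ?andbT //=.
  by rewrite (disj e eD2 eT).
by rewrite cards0 subn0.
Qed.

Lemma sf_edge {N n} {R : seq (cube N)} (a b : cubeR R) :
  share_face n a b -> is_edge n [set a; b].
Proof. by move=> h; apply/existsP; exists a; apply/existsP; exists b; rewrite h eqxx. Qed.

Lemma flip_data {N n} {R : seq (cube N)} (M : move n R) : is_flip M ->
  exists (a b c d : cubeR R) (eab ebc ecd eda : edgeR n R),
  [/\ uniq [:: a; b; c; d],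
      [/\ val eab = [set a; b], val ebc = [set b; c], val ecd = [set c; d] & val eda = [set d; a]],
      M.1 = [set eab; ecd] & M.2 = [set ebc; eda]].
Proof.
case=> a [b [c [d [Hu [h1 h2 h3 h4] E1 E2]]]].
exists a, b, c, d.
exists (exist (fun s : {set cubeR R} => is_edge n s) _ (sf_edge h1)),
  (exist (fun s : {set cubeR R} => is_edge n s) _ (sf_edge h2)),
  (exist (fun s : {set cubeR R} => is_edge n s) _ (sf_edge h3)),
  (exist (fun s : {set cubeR R} => is_edge n s) _ (sf_edge h4)).
split=> //.
  by rewrite E1; apply/setP => e; rewrite !inE -!val_eqE.
by rewrite E2; apply/setP => e; rewrite !inE -!val_eqE.
Qed.

Lemma card2sel {T : finType} (f g : T) (P : pred T) : f != g ->
  #|[set e in [set f; g] | P e]| = P f + P g.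
Proof.
move=> fg; case Pf : (P f); case Pg : (P g).
- have -> : [set e in [set f; g] | P e] = [set f; g].
    apply/setP => e; rewrite !inE; case: (eqVneq e f) => [->|ef]; [|case: (eqVneq e g) => [->|eg]];
    by rewrite ?eqxx ?Pf ?Pg ?(negbTE fg) ?(negbTE ef) ?(negbTE eg) ?andbF ?andbT ?orbT ?orbF.
  by rewrite cards2 fg.
- have -> : [set e in [set f; g] | P e] = [set f].
    apply/setP => e; rewrite !inE; case: (eqVneq e f) => [->|ef]; [|case: (eqVneq e g) => [->|eg]];
    by rewrite ?eqxx ?Pf ?Pg ?(negbTE fg) ?(negbTE ef) ?(negbTE eg) ?andbF ?andbT ?orbT ?orbF.
  by rewrite cards1.
- have -> : [set e in [set f; g] | P e] = [set g].
    apply/setP => e; rewrite !inE; case: (eqVneq e f) => [->|ef]; [|case: (eqVneq e g) => [->|eg]];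
    by rewrite ?eqxx ?Pf ?Pg ?(negbTE fg) ?(negbTE ef) ?(negbTE eg) ?andbF ?andbT ?orbT ?orbF.
  by rewrite cards1.
- have -> : [set e in [set f; g] | P e] = set0.
    apply/setP => e; rewrite !inE; case: (eqVneq e f) => [->|ef]; [|case: (eqVneq e g) => [->|eg]];
    by rewrite ?eqxx ?Pf ?Pg ?(negbTE fg) ?(negbTE ef) ?(negbTE eg) ?andbF ?andbT ?orbT ?orbF.
  by rewrite cards0.
Qed.

Lemma uniq4 {T : eqType} (a b c d : T) : uniq [:: a; b; c; d] ->
  (a == b) = false /\ (a == c) = false /\ (a == d) = false /\
      (b == c) = false /\ (b == d) = false /\ (c == d) = false.
Proof.
rewrite /= !inE !negb_or => /and4P [/and3P [h1 h2 h3] /andP [h4 h5] h6 _].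
by rewrite (negbTE h1) (negbTE h2) (negbTE h3) (negbTE h4) (negbTE h5) (negbTE h6).
Qed.

Lemma flip_count {N n} {R : seq (cube N)} (M : move n R) : is_flip M ->
  forall x, #|[set e in M.1 | x \in val e]| = #|[set e in M.2 | x \in val e]|.
Proof.
case/flip_data=> a [b [c [d [eab [ebc [ecd [eda [Hu [v1 v2 v3 v4] -> ->]]]]]]]] x.
have [ab [ac [ad [bc [bd cd]]]]] := uniq4 Hu.
have n1 : eab != ecd.
  by apply/eqP => /(congr1 val); rewrite v1 v3 => /setP /(_ a); rewrite !inE eqxx ac ad.
have n2 : ebc != eda.
  by apply/eqP => /(congr1 val); rewrite v2 v4 => /setP /(_ b); rewrite !inE eqxx bd (eq_sym b a) ab.
rewrite !card2sel // v1 v2 v3 v4 !inE.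
case: (eqVneq x a) => [->|xa]; first by rewrite ab ac ad.
case: (eqVneq x b) => [->|xb]; first by rewrite bc bd.
case: (eqVneq x c) => [->|xc]; first by rewrite cd.
by case: (eqVneq x d).
Qed.

Lemma flip_rev {N n} {R : seq (cube N)} (M : move n R) : is_flip M -> is_flip (M.2, M.1).
Proof.
case=> a [b [c [d [Hu [h1 h2 h3 h4] E1 E2]]]].
exists b, c, d, a; split.
- have [ab [ac [ad [bc [bd cd]]]]] := uniq4 Hu.
  by rewrite /= !inE bc bd (eq_sym b a) ab cd (eq_sym c a) ac (eq_sym d a) ad.
- by split.
- exact: E2.
- by rewrite /= E1; apply/setP => e; rewrite !inE orbC.
Qed.

Lemma partner {N n} {R : seq (cube N)} (T T' D1 D2 : {set edgeR n R}) (b c : cubeR R)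
  (f1 f2 g : edgeR n R) :
  is_tiling T -> is_tiling T' -> T' = (T :\: D1) :|: D2 -> f2 \in D2 ->
  (forall e, e \in D1 -> c \in val e -> e = g) ->
  c \in val f2 -> b \in val f2 -> b \in val f1 -> c \notin val f1 -> f1 \in T -> g \in T.
Proof.
move=> HT HT' ET' f2D2 Hg cf2 bf2 bf1 cf1 f1T.
have [e [eT ce]] := tiling_ex c HT.
case eD1 : (e \in D1); first by rewrite -(Hg e eD1 ce).
have eT' : e \in T' by rewrite ET' !inE eD1 eT.
have f2T' : f2 \in T' by rewrite ET' !inE f2D2 orbT.
have ef2 := tiling_uniq HT' eT' f2T' ce cf2.
rewrite ef2 in eT.
have := tiling_uniq HT eT f1T bf2 bf1.
by move=> E; rewrite -E cf2 in cf1.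
Qed.

Lemma flip_dich {N n} {R : seq (cube N)} (M : move n R) (T : {set edgeR n R}) :
  is_flip M -> is_tiling T -> is_tiling (apply_move T M) ->
  M.1 \subset T \/ T = apply_move T M.
Proof.
move=> HM HT HT'.
have [a [b [c [d [eab [ebc [ecd [eda [Hu [v1 v2 v3 v4] E1 E2]]]]]]]]] := flip_data HM.
have [ab [ac [ad [bc [bd cd]]]]] := uniq4 Hu.
have ET' : apply_move T M = (T :\: M.1) :|: M.2 by [].
case eabT : (eab \in T).
  left.
  have ecdT : ecd \in T.
    apply: (partner (b := b) (c := c) (f1 := eab) (f2 := ebc) HT HT' ET') => //.
    - by rewrite E2 !inE eqxx.
    - move=> e; rewrite E1 !inE => /orP [/eqP -> | /eqP -> //].
      by rewrite v1 !inE (eq_sym c a) ac (eq_sym c b) bc.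
    - by rewrite v2 !inE eqxx orbT.
    - by rewrite v2 !inE eqxx.
    - by rewrite v1 !inE eqxx orbT.
    - by rewrite v1 !inE (eq_sym c a) ac (eq_sym c b) bc.
  by apply/subsetP => e; rewrite E1 !inE => /orP [/eqP -> | /eqP ->].
right.
have ecdT : ecd \notin T.
  apply/negP => ecdT.
  have : eab \in T.
    apply: (partner (b := d) (c := a) (f1 := ecd) (f2 := eda) HT HT' ET') => //.
    - by rewrite E2 !inE eqxx orbT.
    - move=> e; rewrite E1 !inE => /orP [/eqP -> // | /eqP ->].
      by rewrite v3 !inE ac ad.
    - by rewrite v4 !inE eqxx orbT.
    - by rewrite v4 !inE eqxx.
    - by rewrite v3 !inE eqxx orbT.
    - by rewrite v3 !inE ac ad.
  by rewrite eabT.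
apply: tiling_sub_eq => //; apply/subsetP => e eT.
rewrite ET' !inE eT andbT E1 !inE.
apply/orP; left.
apply/negP => /orP [/eqP eE | /eqP eE]; rewrite eE in eT.
  by rewrite eT in eabT.
by rewrite eT in ecdT.
Qed.
Import GRing.Theory.
Local Open Scope ring_scope.

Definition mono {N n} {R : seq (cube N)} (E : {set edgeR n R}) : 'X_{1..#|edgeR n R|} :=
  [multinom ((enum_val i \in E) : nat) | i < #|edgeR n R|].

Lemma monoE {N n} {R : seq (cube N)} (E : {set edgeR n R}) i :
  mono E i = (enum_val i \in E).
Proof. by rewrite mnmE. Qed.

Lemma monoE' {N n} {R : seq (cube N)} (E : {set edgeR n R}) e :
  mono E (enum_rank e) = (e \in E).
Proof. by rewrite monoE enum_rankK. Qed.

Lemma mono_inj {N n} {R : seq (cube N)} (E F : {set edgeR n R}) :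
  mono E = mono F -> E = F.
Proof.
move=> /mnmP H; apply/setP => e; have := H (enum_rank e).
by rewrite !monoE' => /eqP; case: (e \in E); case: (e \in F).
Qed.

Lemma ymonE {N n} {R : seq (cube N)} (K : fieldType) (E : {set edgeR n R}) :
  ymon K E = 'X_[mono E].
Proof.
rewrite /ymon /yvar mpolyXE_id.
rewrite [RHS](eq_bigr (fun i : 'I_#|edgeR n R| => if enum_val i \in E then 'X_i else (1 : polyR n R K))); last first.
  by move=> i _; rewrite monoE; case: (enum_val i \in E); rewrite ?expr1 ?expr0.
rewrite -big_mkcond /=.
rewrite [LHS](reindex (@enum_val (edgeR n R) predT)) /=; last by exists enum_rank => x _; rewrite ?enum_valK ?enum_rankK.
by apply: eq_bigr => i _; rewrite enum_valK.
Qed.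

Lemma ideal0 {N n} {R : seq (cube N)} {K : fieldType} (S : polyR n R K -> Prop) :
  ideal_gen S 0.
Proof. by exists [::]; rewrite big_nil. Qed.

Lemma idealD {N n} {R : seq (cube N)} {K : fieldType} (S : polyR n R K -> Prop) p q :
  ideal_gen S p -> ideal_gen S q -> ideal_gen S (p + q).
Proof.
move=> [g1 [H1 ->]] [g2 [H2 ->]]; exists (g1 ++ g2); split; last by rewrite big_cat.
by move=> x; rewrite mem_cat => /orP [/H1|/H2].
Qed.

Lemma idealM {N n} {R : seq (cube N)} {K : fieldType} (S : polyR n R K -> Prop) r p :
  ideal_gen S p -> ideal_gen S (r * p).
Proof.
move=> [g [H ->]]; exists [seq (r * x.1, x.2) | x <- g]; split.
  by move=> x /mapP [y yg ->]; exact: (H y yg).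
by rewrite big_map mulr_sumr; apply: eq_bigr => x _; rewrite mulrA.
Qed.

Lemma idealS {N n} {R : seq (cube N)} {K : fieldType} (S : polyR n R K -> Prop) p :
  S p -> ideal_gen S p.
Proof.
by move=> Sp; exists [:: (1, p)]; split; [move=> x; rewrite inE => /eqP -> | rewrite big_seq1 mul1r].
Qed.

Lemma ideal_mono {N n} {R : seq (cube N)} {K : fieldType} (S S' : polyR n R K -> Prop) p :
  (forall q, S q -> ideal_gen S' q) -> ideal_gen S p -> ideal_gen S' p.
Proof.
move=> HS [g [H ->]]; elim: g H => [|x g IH] H; first by rewrite big_nil; exact: ideal0.
rewrite big_cons; apply: idealD.
  by apply: idealM; apply: HS; apply: H; rewrite inE eqxx.
by apply: IH => y yg; apply: H; rewrite inE yg orbT.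
Qed.

Lemma mono_add {N n} {R : seq (cube N)} (A B : {set edgeR n R}) :
  (forall e, e \in A -> e \in B -> False) -> (mono A + mono B)%MM = mono (A :|: B).
Proof.
move=> H; apply/mnmP => i; rewrite mnmDE !monoE inE.
have := H (enum_val i).
by case: (enum_val i \in A); case: (enum_val i \in B) => //= h; exfalso; apply: h.
Qed.

Lemma fwd_step {N n} {R : seq (cube N)} (K : fieldType) (M : move n R) (T : {set edgeR n R}) :
  is_flip M -> is_tiling T -> is_tiling (apply_move T M) ->
  I_flip (ymon K T - ymon K (apply_move T M)).
Proof.
move=> HM HT HT'.
case: (flip_dich HM HT HT') => [sub | E]; last by rewrite -E subrr; exact: ideal0.
have [disj _] := move_tiling HT sub (flip_count HM).
have E1 : ymon K T = ymon K (T :\: M.1) * ymon K M.1.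
  rewrite !ymonE -mpolyXD mono_add; last by move=> e; rewrite !inE => /andP [/negP h _].
  congr 'X_[mono _]; apply/setP => e; rewrite !inE.
  by case eM: (e \in M.1); rewrite ?orbT ?orbF //= (subsetP sub _ eM).
have E2 : ymon K (apply_move T M) = ymon K (T :\: M.1) * ymon K M.2.
  rewrite !ymonE -mpolyXD mono_add //.
  move=> e; rewrite !inE => /andP [/negP h1 h2] h3; apply: h1; exact: disj.
rewrite E1 E2 -mulrBr; apply: idealM; apply: idealS.
by exists M.
Qed.

Lemma fwd_seq {N n} {R : seq (cube N)} (K : fieldType) (Ms : seq (move n R)) :
  forall T : {set edgeR n R}, is_tiling T ->
  (forall M, M \in Ms -> is_flip M) ->
  (forall s, (1 <= s <= size Ms)%N -> is_tiling (foldl (@apply_move N n R) T (take s Ms))) ->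
  I_flip (ymon K T - ymon K (foldl (@apply_move N n R) T Ms)).
Proof.
elim: Ms => [|M Ms IH] T HT Hf Hs; first by rewrite /= subrr; exact: ideal0.
have HT0 : is_tiling (apply_move T M) by have := Hs 1%N; rewrite /= take0; apply.
have -> : ymon K T - ymon K (foldl (@apply_move N n R) T (M :: Ms)) =
  (ymon K T - ymon K (apply_move T M)) + (ymon K (apply_move T M) - ymon K (foldl (@apply_move N n R) (apply_move T M) Ms)).
  by rewrite /= addrA subrK.
apply: idealD; first by apply: fwd_step => //; apply: Hf; rewrite inE eqxx.
apply: IH => //.
  by move=> M' HM'; apply: Hf; rewrite inE HM' orbT.
move=> s /andP [s1 s2]; have := Hs s.+1; by rewrite /= ltnS s2 /=; apply.
Qed.

Definition reach {N n} {R : seq (cube N)} (T1 T : {set edgeR n R}) : Prop :=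
  exists Ms : seq (move n R),
    [/\ forall M, M \in Ms -> is_flip M,
        forall s, (1 <= s <= size Ms)%N -> is_tiling (foldl (@apply_move N n R) T1 (take s Ms))
      & foldl (@apply_move N n R) T1 Ms = T].

Definition Cb {N n} {R : seq (cube N)} (T1 T : {set edgeR n R}) : bool :=
  if excluded_middle_informative (is_tiling T /\ reach T1 T) then true else false.

Lemma CbP {N n} {R : seq (cube N)} (T1 T : {set edgeR n R}) :
  Cb T1 T <-> (is_tiling T /\ reach T1 T).
Proof. by rewrite /Cb; case: excluded_middle_informative. Qed.

Lemma reach_step {N n} {R : seq (cube N)} (T1 T : {set edgeR n R}) M :
  reach T1 T -> is_flip M -> is_tiling (apply_move T M) -> reach T1 (apply_move T M).
Proof.
move=> [Ms [Hf Hs HT]] HM HT'; exists (rcons Ms M); split.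
- by move=> M'; rewrite mem_rcons inE => /orP [/eqP -> | /Hf].
- move=> s; rewrite size_rcons => /andP [s1 s2].
  case: (ltnP s (size Ms).+1) => hs.
    by rewrite -cats1 takel_cat //; apply: Hs; rewrite s1.
  have -> : s = (size Ms).+1 by apply/eqP; rewrite eqn_leq s2 hs.
  by rewrite take_oversize ?size_rcons // foldl_rcons HT.
- by rewrite foldl_rcons HT.
Qed.

Lemma key {N n} {R : seq (cube N)} (T1 T : {set edgeR n R}) (M : move n R) m :
  is_flip M -> Cb T1 T -> (m + mono M.1)%MM = mono T ->
  exists T', Cb T1 T' /\ (m + mono M.2)%MM = mono T'.
Proof.
move=> HM /CbP [HT HrT] /mnmP H.
have sub : M.1 \subset T.
  apply/subsetP => e eM; have := H (enum_rank e); rewrite mnmDE !monoE' eM.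
  by case: (e \in T) => //=; rewrite addn1.
have [disj HT'] := move_tiling HT sub (flip_count HM).
have Em : m = mono (T :\: M.1).
  apply/mnmP => i; have := H i; rewrite mnmDE !monoE !inE.
  have := subsetP sub (enum_val i).
  case: (enum_val i \in M.1); case: (enum_val i \in T) => //=.
  - by move=> _; rewrite addn1 => -[].
  - by move=> h; have := h isT.
  - by rewrite addn0.
  - by rewrite addn0.
exists (apply_move T M); split.
  by apply/CbP; split => //; apply: reach_step.
rewrite Em mono_add //.
move=> e; rewrite !inE => /andP [/negP h1 h2] h3; apply: h1; exact: disj.
Qed.

Definition Lf {N n} {R : seq (cube N)} (K : fieldType) (T1 : {set edgeR n R}) (p : polyR n R K) : K :=
  \sum_(T : {set edgeR n R} | Cb T1 T) p@_(mono T).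

Lemma LfD {N n} {R : seq (cube N)} (K : fieldType) T1 (p q : polyR n R K) :
  Lf T1 (p + q) = Lf T1 p + Lf T1 q.
Proof. by rewrite /Lf -big_split; apply: eq_bigr => T _; rewrite mcoeffD. Qed.

Lemma Lf0 {N n} {R : seq (cube N)} (K : fieldType) T1 : Lf T1 (0 : polyR n R K) = 0.
Proof. by rewrite /Lf big1 // => T _; rewrite mcoeff0. Qed.

Lemma LfZ {N n} {R : seq (cube N)} (K : fieldType) T1 c (p : polyR n R K) :
  Lf T1 (c *: p) = c * Lf T1 p.
Proof. by rewrite /Lf mulr_sumr; apply: eq_bigr => T _; rewrite mcoeffZ. Qed.

Lemma LfB {N n} {R : seq (cube N)} (K : fieldType) T1 (p q : polyR n R K) :
  Lf T1 (p - q) = Lf T1 p - Lf T1 q.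
Proof. by rewrite /Lf -sumrB; apply: eq_bigr => T _; rewrite mcoeffB. Qed.

Lemma Lf_sum {N n} {R : seq (cube N)} (K : fieldType) T1 (I : Type) (s : seq I) (F : I -> polyR n R K) :
  Lf T1 (\sum_(i <- s) F i) = \sum_(i <- s) Lf T1 (F i).
Proof.
elim: s => [|x s IH]; first by rewrite !big_nil Lf0.
by rewrite !big_cons LfD IH.
Qed.

Lemma LX_yes {N n} {R : seq (cube N)} (K : fieldType) T1 (T : {set edgeR n R}) :
  Cb T1 T -> Lf T1 ('X_[mono T] : polyR n R K) = 1.
Proof.
move=> HT; rewrite /Lf (bigD1 T) //= mcoeffX eqxx big1 ?addr0 //.
move=> T' /andP [_ hT']; rewrite mcoeffX.
case: eqP => // /mono_inj E; by rewrite E eqxx in hT'.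
Qed.

Lemma LX_no {N n} {R : seq (cube N)} (K : fieldType) T1 m :
  (forall T : {set edgeR n R}, Cb T1 T -> mono T <> m) -> Lf T1 ('X_[m] : polyR n R K) = 0.
Proof.
move=> H; rewrite /Lf big1 // => T hT; rewrite mcoeffX.
by case: eqP => // E; exfalso; apply: (H T hT); rewrite E.
Qed.

Lemma LX_eq {N n} {R : seq (cube N)} (K : fieldType) (T1 : {set edgeR n R}) (M : move n R) m :
  is_flip M ->
  Lf T1 ('X_[m + mono M.1] : polyR n R K) = Lf T1 ('X_[m + mono M.2]).
Proof.
move=> HM; have HM' := flip_rev HM.
case: (excluded_middle_informative (exists T, Cb T1 T /\ (m + mono M.1)%MM = mono T)).
  move=> [T [hT E]]; have [T' [hT' E']] := key HM hT E.
  by rewrite E E' !LX_yes.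
move=> hno; rewrite LX_no; last by move=> T hT E; apply: hno; exists T; split.
rewrite LX_no // => T hT E.
have [T' [hT' E']] := key (M := (M.2, M.1)) HM' hT (esym E).
by apply: hno; exists T'.
Qed.

Lemma Lf_gen {N n} {R : seq (cube N)} (K : fieldType) (T1 : {set edgeR n R}) (M : move n R) (q : polyR n R K) :
  is_flip M -> Lf T1 (q * (ymon K M.1 - ymon K M.2)) = 0.
Proof.
move=> HM.
have Hq : forall a, Lf T1 (q * 'X_[a]) = \sum_(m <- msupp q) q@_m * Lf T1 ('X_[m + a]).
  move=> a; rewrite {1}(mpolyE q) mulr_suml Lf_sum; apply: eq_bigr => m _.
  by rewrite -scalerAl -mpolyXD LfZ.
rewrite mulrBr LfB !ymonE !Hq; apply/eqP; rewrite subr_eq0; apply/eqP.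
by apply: eq_bigr => m _; congr (_ * _); apply: LX_eq.
Qed.

Theorem mainTheorem6 (K : fieldType) (N n : nat) (R : seq (cube N)) :
  cubiculated n R ->
  (flip_connected n R <-> (forall p : polyR n R K, I_tiling p -> I_flip p)).
Proof.
move=> _; split.
  move=> Hfc p; apply: ideal_mono => q [T1 [T2 [H1 H2 ->]]].
  have [Ms [Hf Hs <-]] := Hfc T1 T2 H1 H2.
  exact: fwd_seq.
move=> H T1 T2 H1 H2.
have : I_flip (ymon K T1 - ymon K T2).
  by apply: H; apply: idealS; exists T1, T2.
move=> [gs [Hgs E]].
have HL : Lf T1 (ymon K T1 - ymon K T2) = 0.
  rewrite E Lf_sum big_seq big1 // => x xg.
  have [M [HM ->]] := Hgs x xg.
  exact: Lf_gen.
have C1 : Cb T1 T1.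
  apply/CbP; split; first exact: H1.
  exists [::]; split.
  - by [].
  - by move=> s /andP [s1 s2]; have := leq_trans s1 s2.
  - by [].
case: (excluded_middle_informative (exists T, Cb T1 T /\ mono T = mono T2)).
  move=> [T [hT /mono_inj ET]]; rewrite ET in hT.
  by have [_ HR] := (CbP T1 T2).1 hT; exact: HR.
move=> hno; exfalso.
move: HL; rewrite LfB !ymonE (LX_yes _ C1) LX_no; last first.
  by move=> T hT E'; apply: hno; exists T.
by rewrite subr0 => /eqP; rewrite oner_eq0.
Qed.
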